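(* Let $P>0$. For any code $\mathcal{C}\subset\mathcal{B}^n(\sqrt{nP})$, there exist $\varepsilon>0$ with $\varepsilon\to0$ as $|\mathcal{C}|\to\infty$, an increasing function $f(\cdot)$, a constant $0<d<4P$ and a subcode $\mathcal{C}'\subseteq\mathcal{C}$ of size at least $f(|\mathcal{C}|)$ such that $\|x_i-x_j\|_2\in\left[\sqrt{n(d-\varepsilon)},\sqrt{n(d+\varepsilon)}\right]$ for all distinct $x_i,x_j\in\mathcal{C}'$.
   Context: $\mathcal{B}^n(r)$ is the closed Euclidean ball in $\mathbb{R}^n$ of radius $r$ centered at the origin; a code is a finite subset. Here $\varepsilon$ depends only on $|\mathcal{C}|$ (and $P$) and $f$ does not depend on $n$ or $\mathcal{C}$. *)

(* Defs.v *)
From HB Require Import structures.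
From mathcomp Require Import all_boot all_order all_algebra.
From mathcomp Require Import finmap.
From mathcomp Require Import reals.
Set Implicit Arguments. Unset Strict Implicit. Unset Printing Implicit Defensive.
Import Order.TTheory GRing.Theory Num.Theory.
Local Open Scope ring_scope.

Definition enorm (R : realType) (n : nat) (x : 'rV[R]_n) : R :=
  Num.sqrt (\sum_(i < n) x 0 i ^+ 2).

Definition in_ball (R : realType) (n : nat) (r : R) (x : 'rV[R]_n) : Prop :=
  enorm x <= r.

(* Main.v *)
Require Import Defs.
From HB Require Import structures.
From mathcomp Require Import all_boot all_order all_algebra.
From mathcomp Require Import finmap.
From mathcomp Require Import reals.
From mathcomp Require Import zify.
From mathcomp Require Import ring lra.
Import Order.TTheory GRing.Theory Num.Theory.
Local Open Scope ring_scope.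
Local Open Scope fset_scope.

Section Comb.
Local Open Scope nat_scope.
Variable T : eqType.
Variable c : T -> T -> nat.

Fixpoint good (h : T -> nat) (s : seq T) : bool :=
  if s is x :: s' then all (fun y => c x y == h x) s' && good h s' else true.

Lemma eq_good h h' s : {in s, h =1 h'} -> good h s = good h' s.
Proof.
elim: s => //= x s IH H; rewrite H ?mem_head // IH // => y ys.
by apply: H; rewrite inE ys orbT.
Qed.

Lemma pig (h : T -> nat) k t s : all (fun x => h x < k) s -> k * t < size s ->
  exists j, t < count (fun x => h x == j) s.
Proof.
elim: k s => [|k IH] s Hs Hsz.
  by case: s Hs Hsz => //= x s; rewrite ltn0.
case: (ltnP t (count (fun x => h x == k) s)) => Hc; first by exists k.
have := IH [seq x <- s | h x != k].
rewrite all_filter size_filter.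
have E : count (fun x => h x != k) s = size s - count (fun x => h x == k) s.
  by rewrite -(count_predC (fun x => h x == k) s) addKn.
case.
- apply/allP => x xs; apply/implyP => hk; move/allP: Hs => /(_ x xs).
  by rewrite ltnS leq_eqVlt (negbTE hk).
- move: Hc Hsz E; rewrite /predC /=. lia.
move=> j Hj; exists j; apply: (leq_trans Hj).
rewrite count_filter; apply: sub_count => x /= /andP[] //.
Qed.

Lemma mono_filter (h : T -> nat) s j : (forall x y, c x y = c y x) -> good h s ->
  forall x y, x \in [seq z <- s | h z == j] -> y \in [seq z <- s | h z == j] -> x != y ->
  c x y = j.
Proof.
move=> Hsym; elim: s => //= a s IH /andP[Ha Hg] x y.
case: ifP => Hh.
- rewrite !inE => /orP[/eqP->|xs] /orP[/eqP->|ys]; rewrite ?eqxx //.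
  + move=> _; move: ys; rewrite mem_filter => /andP[_ ys].
    by move/allP: Ha => /(_ y ys) /eqP ->; apply/eqP.
  + move=> _; move: xs; rewrite mem_filter => /andP[_ xs].
    by rewrite Hsym; move/allP: Ha => /(_ x xs) /eqP ->; apply/eqP.
  + exact: IH.
- exact: IH.
Qed.

Lemma seqA k (Hk : 1 < k) (Hc : forall x y, c x y < k) m :
  forall S : seq T, uniq S -> k ^ m <= size S ->
  exists s h, [/\ uniq s, {subset s <= S}, size s = m, all (fun x => h x < k) s & good h s].
Proof.
elim: m => [|m IH] S uS HS.
  by exists [::], (fun _ => 0); split.
case: S uS HS => [|x S0] /=.
  by rewrite leqn0 expn_eq0; move: Hk; case: (k) => //.
move=> /andP[xS0 uS0] HS.
have Hp : k * (k ^ m).-1 < size S0.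
  move: HS; rewrite expnS.
  have : 0 < k ^ m by rewrite expn_gt0; move: Hk; case: (k).
  move: (k ^ m) => K; nia.
have [j Hj] := @pig (c x) k (k ^ m).-1 S0 (introT allP (fun y _ => Hc x y)) Hp.
have Hsz : k ^ m <= size [seq y <- S0 | c x y == j].
  by rewrite size_filter; move: Hj; case: (k ^ m) => //.
have [s [h [us ss sz ha hg]]] := IH [seq y <- S0 | c x y == j] (filter_uniq _ uS0) Hsz.
have xs : x \notin s by apply/negP => /ss; rewrite mem_filter => /andP[_ /(negP xS0)].
exists (x :: s), (fun z => if z == x then j else h z); split.
- by rewrite /= xs us.
- by move=> y; rewrite !inE => /orP[->//|/ss]; rewrite mem_filter => /andP[_ ->]; rewrite orbT.
- by rewrite /= sz.
- have jk : j < k.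
    have : has (fun y => c x y == j) S0 by rewrite has_count; move: Hj; case: count.
    by case/hasP => y _ /eqP <-; exact: Hc.
  rewrite /= eqxx jk /=; apply/allP => y ys.
  have ->: (y == x) = false by apply/negP => /eqP e; rewrite -e ys in xs.
  by move/allP: ha => /(_ y ys).
- rewrite /= eqxx; apply/andP; split.
    by apply/allP => y /ss; rewrite mem_filter => /andP[].
  rewrite (@eq_good _ h) // => y ys.
  have ->: (y == x) = false by apply/negP => /eqP e; rewrite -e ys in xs.
  by [].
Qed.
End Comb.

Section Gdef.
Local Open Scope nat_scope.
Definition Bf (t : nat) : nat := (t + 2) ^ ((t + 2) * t).
Definition gM (M : nat) : nat := \max_(a < M.+1 | Bf a <= M) a.

Lemma Bf_ge t : t <= Bf t.
Proof.
case: t => // t; rewrite /Bf.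
apply: (@leq_trans (t.+1 + 2)); first by rewrite leq_addr.
rewrite -{1}(expn1 (t.+1 + 2)) leq_pexp2l //; lia.
Qed.

Lemma gM_ge t M : Bf t <= M -> t <= gM M.
Proof.
move=> H; have tM : t < M.+1 by rewrite ltnS (leq_trans (Bf_ge t) H).
exact: (@leq_bigmax_cond _ (fun a : 'I_M.+1 => Bf a <= M) (fun a => nat_of_ord a) (Ordinal tM) H).
Qed.

Lemma gM_spec M : gM M = 0 \/ Bf (gM M) <= M.
Proof.
suff : (gM M == 0) || (Bf (gM M) <= M) by case/orP => [/eqP|]; [left|right].
rewrite /gM; apply: (big_ind (fun x => (x == 0) || (Bf x <= M))) => //.
  by move=> x y Hx Hy; case: (leqP x y).
by move=> i ->; rewrite orbT.
Qed.

Lemma gM_mono M M' : M <= M' -> gM M <= gM M'.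
Proof.
move=> H; case: (gM_spec M) => [->//|B]; apply: gM_ge; exact: leq_trans H.
Qed.
End Gdef.

Lemma band (R : realType) (n k : nat) (P S : R) : 0 < P -> (0 < k)%N ->
  0 <= S -> S <= n%:R * (4 * P) ->
  n%:R * ((minn k.-1 (Num.truncn (S / n%:R / (4 * P / k%:R))))%:R * (4 * P / k%:R)) <= S /\
  S <= n%:R * ((minn k.-1 (Num.truncn (S / n%:R / (4 * P / k%:R)))).+1%:R * (4 * P / k%:R)).
Proof.
move=> P0 k0 S0 SP.
set w := 4 * P / k%:R.
have w0 : 0 < w by rewrite divr_gt0 ?ltr0n // mulr_gt0.
have kw : k%:R * w = 4 * P by rewrite /w mulrCA mulfV ?mulr1 // pnatr_eq0 -lt0n.
case: n SP => [|n] SP.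
  have -> : S = 0 by apply/le_anti; rewrite S0 andbT; move: SP; rewrite mul0r.
  by rewrite !mul0r.
set D := S / n.+1%:R.
have n0 : 0 < n.+1%:R :> R by rewrite ltr0n.
have SD : S = n.+1%:R * D by rewrite /D mulrCA mulfV ?mulr1 // gt_eqF.
have D0 : 0 <= D by rewrite /D divr_ge0 // ler0n.
have DP : D <= k%:R * w by rewrite kw /D ler_pdivrMr // mulrC.
rewrite SD; rewrite !ler_pM2l //.
have Dw0 : 0 <= D / w by rewrite divr_ge0 // ltW.
have /andP[q1 q2] := Num.Theory.truncn_itv Dw0.
move: q1 q2; set q := Num.truncn (D / w) => q1 q2.
rewrite ler_pdivlMr // in q1; rewrite ltr_pdivrMr // in q2.
case: (leqP q k.-1) => qk.
  split => //; exact: ltW.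
split.
  apply: le_trans q1; rewrite ler_pM2r // ler_nat; exact: ltnW.
by rewrite prednK.
Qed.

Theorem mainTheorem14 (R : realType) (P : R) (hP : 0 < P) :
  exists eps : nat -> R,
    (forall M, 0 < eps M) /\
    (forall e : R, 0 < e -> exists N : nat, forall M : nat, (N <= M)%N -> eps M < e) /\
  exists f : nat -> R,
    (forall a b : nat, (a < b)%N -> f a < f b) /\
    (forall K : R, exists N : nat, forall M : nat, (N <= M)%N -> K <= f M) /\
  forall (n : nat) (C : {fset 'rV[R]_n}),
    (forall x, x \in C -> in_ball (Num.sqrt (n%:R * P)) x) ->
    exists d : R, 0 < d /\ d < 4 * P /\
    exists C' : {fset 'rV[R]_n},
      C' `<=` C /\ f #|` C| <= (#|` C'|)%:R /\
      forall x y, x \in C' -> y \in C' -> x != y ->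
        Num.sqrt (n%:R * (d - eps #|` C|)) <= enorm (x - y) /\
        enorm (x - y) <= Num.sqrt (n%:R * (d + eps #|` C|)).
Proof.
exists (fun M => 4 * P / (gM M + 2)%:R / 2).
split.
  move=> M; rewrite !divr_gt0 ?ltr0n ?mulr_gt0 //; lia.
split.
  move=> e e0.
  have Hb : 0 <= 2 * P / e by rewrite divr_ge0 // ?mulr_ge0 // ltW.
  exists (Bf (Num.bound (2 * P / e))) => M HM.
  have tg := gM_ge _ _ HM.
  have := archi_boundP Hb; set t := Num.bound _ => Ht.
  rewrite ltr_pdivrMr // ltr_pdivrMr ?ltr0n; last lia.
  rewrite ltr_pdivrMr // in Ht.
  have h1 : t%:R * e <= (gM M + 2)%:R * e.
    by rewrite ler_pM2r // ler_nat; lia.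
  lra.
exists (fun M => (gM M)%:R - (M.+1%:R)^-1).
split.
  move=> a b ab /=.
  have g1 : (gM a)%:R <= (gM b)%:R :> R by rewrite ler_nat; apply: gM_mono; exact: ltnW.
  have g2 : (b.+1%:R)^-1 < (a.+1%:R)^-1 :> R.
    by rewrite ltf_pV2 ?posrE ?ltr0n // ltr_nat ltnS.
  move: g1 g2; move: (gM a)%:R (gM b)%:R (b.+1%:R^-1) (a.+1%:R^-1) => ? ? ? ?; lra.
split.
  move=> K.
  have Hb : 0 <= (Num.norm K + 1)%R by rewrite addr_ge0.
  exists (Bf (Num.bound ((Num.norm K + 1)%R))) => M HM /=.
  have tg := gM_ge _ _ HM.
  have := archi_boundP Hb; set t := Num.bound _ => Ht.
  have h1 : t%:R <= (gM M)%:R :> R by rewrite ler_nat.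
  have h2 : (M.+1%:R)^-1 <= 1 :> R by rewrite invr_le1 ?unitfE ?pnatr_eq0 // ?ler1n ?ltr0n.
  have h3 : K <= (Num.norm K) := ler_norm K.
  move: Ht h1 h2 h3; move: (t%:R) (gM M)%:R (M.+1%:R^-1) ((Num.norm K)) => ? ? ? ?; lra.
move=> n C HC.
set M := #|` C|.
set k := (gM M + 2)%N.
set w := (4 * P / k%:R)%R.
have k0 : (0 < k)%N by rewrite /k addn2.
have w0 : 0 < w by rewrite divr_gt0 ?ltr0n // mulr_gt0.
have kw : (k%:R * w = 4 * P)%R by rewrite /w mulrCA mulfV ?mulr1 // pnatr_eq0 -lt0n.
pose Sd (x y : 'rV[R]_n) : R := (\sum_(i < n) (x - y) 0 i ^+ 2)%R.
pose c (x y : 'rV[R]_n) : nat := minn k.-1 (Num.truncn (Sd x y / n%:R / w)).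
have Hc : forall x y, (c x y < k)%N by move=> x y; rewrite /c; lia.
have Hsym : forall x y, c x y = c y x.
  move=> x y; rewrite /c /Sd; congr (minn _ (Num.truncn (_ / _ / _))).
  by apply: eq_bigr => i _; rewrite !mxE -sqrrN opprB.
have Sx : forall x, x \in C -> (\sum_(i < n) x 0 i ^+ 2 <= n%:R * P)%R.
  move=> x /HC; rewrite /in_ball /enorm ler_sqrt //; apply: mulr_ge0 => //; exact: ltW.
have Sd0 : forall x y, (0 <= Sd x y)%R by move=> x y; rewrite /Sd; apply: sumr_ge0 => i _; exact: sqr_ge0.
have SdP : forall x y, x \in C -> y \in C -> (Sd x y <= n%:R * (4 * P))%R.
  move=> x y xC yC.
  apply: (le_trans (y := (2 * \sum_(i < n) x 0 i ^+ 2 + 2 * \sum_(i < n) y 0 i ^+ 2)%R)).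
    rewrite !mulr_sumr -big_split /=; apply: ler_sum => i _; rewrite !mxE.
    have := sqr_ge0 (x 0 i + y 0 i); move: (x 0 i) (y 0 i) => a b; nra.
  have := Sx x xC; have := Sx y yC; lra.
case: (posnP (gM M)) => gt.
  exists (2 * P)%R; split; first by rewrite mulr_gt0.
  split; first lra.
  exists fset0; split; first exact: fsub0set.
  split; last by move=> x y; rewrite inE.
  rewrite cardfs0 gt subr_le0 invr_ge0 ler0n //.
have BM : (Bf (gM M) <= M)%N by case: (gM_spec M) => // e; rewrite e in gt.
have Hk : (1 < k)%N by rewrite /k; lia.
have [s [h [us ss sz ha hg]]] := @seqA _ c k Hk Hc (k * gM M) (enum_fset C) (fset_uniq C) BM.
have Hp : (k * (gM M).-1 < size s)%N by rewrite sz; nia.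
have [j Hj] := pig _ _ _ _ _ ha Hp.
pose L := [seq z <- s | h z == j].
have jk : (j < k)%N.
  have : has (fun z => h z == j) s by rewrite has_count; move: Hj; case: count.
  by case/hasP => z zs /eqP <-; move/allP: ha => /(_ z zs).
exists ((j%:R + 2^-1) * w)%R; split.
  by rewrite mulr_gt0 // ltr_wpDl ?ler0n // invr_gt0.
split.
  rewrite -kw ltr_pM2r //.
  have : (j.+1%:R <= k%:R :> R)%R by rewrite ler_nat.
  rewrite -addn1 natrD.
  have : (2^-1 < 1 :> R)%R by rewrite invf_lt1 // ltr1n.
  lra.
exists [fset z in L]; split.
  apply/fsubsetP => z; rewrite inE /L mem_filter => /andP[_ /ss].
  by [].
split.
  rewrite card_fseq undup_id; last exact: filter_uniq.
  rewrite size_filter.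
  have : ((gM M)%:R <= (count (fun z => h z == j) s)%:R :> R)%R by rewrite ler_nat; lia.
  have : (0 <= M.+1%:R^-1 :> R)%R by rewrite invr_ge0 ler0n.
  move: (M.+1%:R^-1) => u; lra.
move=> x y; rewrite !inE => xL yL xy.
have cj : c x y = j := @mono_filter _ c h s j Hsym hg x y xL yL xy.
have xC : x \in C by move: xL; rewrite /L mem_filter => /andP[_ /ss].
have yC : y \in C by move: yL; rewrite /L mem_filter => /andP[_ /ss].
have [B1 B2] := @band R n k P (Sd x y) hP k0 (Sd0 x y) (SdP x y xC yC).
rewrite -/w in B1 B2.
have E1 : ((j%:R + 2^-1) * w - 4 * P / k%:R / 2 = j%:R * w)%R.
  rewrite -/w; ring.
have E2 : ((j%:R + 2^-1) * w + 4 * P / k%:R / 2 = j.+1%:R * w)%R.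
  by rewrite -/w -[j.+1]addn1 natrD; field.
rewrite /M -/k in E1 E2 *; rewrite E1 E2 /enorm.
move: B1 B2; rewrite -/(Sd x y) -/(c x y) cj => B1 B2.
split; exact: ler_wsqrtr.
Qed.
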